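(* Let $\tilde{\mathcal{X}}=\mathcal{Y}=\mathcal{Z}=\{0,1\}$ and $\mathcal{X}=\tilde{\mathcal{X}}\times\mathcal{Z}$. The channel input is $X=(\tilde X,\tilde Z)$; let $N\sim\mathsf{Ber}(0.5)$ be independent of $X$, set $Y=\tilde X\tilde Z+N(1-\tilde Z)$ with induced kernel $P_{Y|\tilde X,\tilde Z}$, and define the wiretap channel $P_{Y,Z|\tilde X,\tilde Z}=P_{Y|\tilde X,\tilde Z}\mathbb{1}\{Z=\tilde Z\}$. Let the cost function be $\mathsf{C}(\tilde x,\tilde z)=\tilde z$ and the cost constraint $b=0.5$. Then $$\max_{P_{U,V,X}} \big(I_P(V;Y|U)-I_P(V;Z|U)\big)\ \ge\ 0.5\ >\ \max_{P_{V,X}:\ \mathbb{E}_P[\mathsf{C}(X)]\le 0.5}\big(I_P(V;Y)-I_P(V;Z)\big),$$ where the first maximum is over finite sets $\mathcal{U},\mathcal{V}$ and PMFs $P_{U,V,X}$ with $P_{U,V,X}=P_{U,V}P_{X|V}$ and $\mathbb{E}_P[\mathsf{C}(X)]\le 0.5$, computed under $P_{U,V,X}P_{Y,Z|X}$, and the second maximum is over finite sets $\mathcal{V}$ and PMFs $P_{V,X}$, computed under $P_{V,X}P_{Y,Z|X}$.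
   Context: The left-hand maximum is the quantity $\bar C(0.5)$, which (by the paper's main theorem) equals the secrecy-capacity of this cost-constrained wiretap channel; the right-hand side is the single-auxiliary analogue of the unconstrained wiretap secrecy-capacity formula restricted to cost-feasible input distributions. *)

(* Defs.v *)
From Stdlib Require Import Reals.
From mathcomp Require Import all_boot all_order all_algebra.
From mathcomp Require Import Rstruct.
Set Implicit Arguments. Unset Strict Implicit. Unset Printing Implicit Defensive.
Import Order.TTheory GRing.Theory Num.Theory.
Local Open Scope ring_scope.

Definition log2 (x : R) : R := (ln x / ln 2)%R.

Definition is_pmf (T : finType) (p : T -> R) : Prop :=
  (forall t, 0 <= p t) /\ \sum_(t : T) p t = 1.

Definition mi (B C : finType) (p : B -> C -> R) : R :=
  let pB b := \sum_(c : C) p b c in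
  let pC c := \sum_(b : B) p b c in
  \sum_(b : B) \sum_(c : C)
     (if 0 < p b c then p b c * log2 (p b c / (pB b * pC c)) else 0).

(* Conditional mutual information I(B;C|A) of a joint pmf p(a,b,c). *)
Definition cmi (A B C : finType) (p : A -> B -> C -> R) : R :=
  let pA a := \sum_(b : B) \sum_(c : C) p a b c in
  let pAB a b := \sum_(c : C) p a b c in
  let pAC a c := \sum_(b : B) p a b c in
  \sum_(a : A) \sum_(b : B) \sum_(c : C)
     (if 0 < p a b c then p a b c * log2 (p a b c * pA a / (pAB a b * pAC a c))
      else 0).

(* Channel input X = (Xt, Zt) in {0,1} x {0,1}, encoded with bool (true = 1). *)
Definition Xin := (bool * bool)%type.

Definition b2R (b : bool) : R := if b then 1 else 0.

(* P_{Y|Xt,Zt}: Y = Xt*Zt + N*(1-Zt), N ~ Ber(1/2) independent of X.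
   If Zt = 1 then Y = Xt; if Zt = 0 then Y = N is uniform. *)
Definition PY (x : Xin) (y : bool) : R :=
  if x.2 then b2R (y == x.1) else 1 / 2.

Definition W (x : Xin) (y z : bool) : R := PY x y * b2R (z == x.2).

Definition cost (x : Xin) : R := b2R x.2.

(* Quantities for P_{U,V,X} = P_{U,V} P_{X|V} with kernel K = P_{X|V}. *)
Definition jointUVY (U V : finType) (PUV : U * V -> R) (K : V -> Xin -> R)
  (u : U) (v : V) (y : bool) : R :=
  \sum_(x : Xin) \sum_(z : bool) PUV (u, v) * K v x * W x y z.
Definition jointUVZ (U V : finType) (PUV : U * V -> R) (K : V -> Xin -> R)
  (u : U) (v : V) (z : bool) : R :=
  \sum_(x : Xin) \sum_(y : bool) PUV (u, v) * K v x * W x y z.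
Definition costUV (U V : finType) (PUV : U * V -> R) (K : V -> Xin -> R) : R :=
  \sum_(u : U) \sum_(v : V) \sum_(x : Xin) PUV (u, v) * K v x * cost x.

Definition jointVY (V : finType) (PVX : V * Xin -> R) (v : V) (y : bool) : R :=
  \sum_(x : Xin) \sum_(z : bool) PVX (v, x) * W x y z.
Definition jointVZ (V : finType) (PVX : V * Xin -> R) (v : V) (z : bool) : R :=
  \sum_(x : Xin) \sum_(y : bool) PVX (v, x) * W x y z.
Definition costV (V : finType) (PVX : V * Xin -> R) : R :=
  \sum_(v : V) \sum_(x : Xin) PVX (v, x) * cost x.

(* Main.v *)
Require Import Defs.
From Stdlib Require Import Reals FunctionalExtensionality.
From mathcomp Require Import all_boot all_order all_algebra.
From mathcomp Require Import Rstruct.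
From mathcomp Require Import lra ring.
Import Order.TTheory GRing.Theory Num.Theory.
Set Implicit Arguments. Unset Strict Implicit.
Local Open Scope ring_scope.
Arguments ln _%_ring_scope.

Lemma IZR2 : IZR 2 = 2%:R :> R.
Proof. by rewrite IZRposE /=. Qed.

Lemma lnle (x : R) : 0 < x -> ln x <= x - 1.
Proof.
move=> /RltP x0; have := exp_ineq1_le (ln x); rewrite exp_ln //.
by move/RleP; rewrite RplusE R1E lerBrDr addrC.
Qed.

Lemma lnM (x y : R) : 0 < x -> 0 < y -> ln (x * y) = ln x + ln y.
Proof. by move=> /RltP hx /RltP hy; rewrite ln_mult. Qed.

Lemma lnV (x : R) : 0 < x -> ln (x^-1) = - ln x.
Proof. by move=> /RltP hx; rewrite -RinvE ln_Rinv. Qed.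

Lemma ln1 (x : R) : x = 1 -> ln x = 0.
Proof. by move=> ->; exact: ln_1. Qed.

Lemma lnlt (x y : R) : 0 < x -> x < y -> ln x < ln y.
Proof. by move=> /RltP hx /RltP hy; apply/RltP; apply: ln_increasing. Qed.

Lemma lnX (x : R) n : 0 < x -> ln (x ^+ n) = n%:R * ln x.
Proof.
move=> x0; elim: n => [|n IH]; first by rewrite expr0 ln1 // mul0r.
by rewrite exprS lnM ?exprn_gt0 // IH mulrSr mulrDl mul1r addrC.
Qed.

Lemma ln2pos : 0 < ln (IZR 2).
Proof. rewrite IZR2 -(@ln1 1%R) //; apply: lnlt; lra. Qed.

Lemma ln2lt : ln (IZR 2) < 3/4.
Proof.
rewrite IZR2.
have h : ln 2%:R < ln ((35/32) ^+ 8) by apply: lnlt; rewrite ?(exprS, expr0); lra.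
rewrite lnX in h; last lra.
have := @lnle (35/32)%R; lra.
Qed.


Lemma ge0_cases (x : R) : 0 <= x -> x = 0 \/ 0 < x.
Proof. by rewrite le_eqVlt => /orP [/eqP <-|]; [left|right]. Qed.

Definition xlnx (x : R) : R := if 0 < x then x * ln x else 0.
Arguments xlnx x%_ring_scope.

Lemma xlnx0 : xlnx 0 = 0.
Proof. by rewrite /xlnx ltxx. Qed.

Lemma xlnxE (x : R) : 0 <= x -> xlnx x = x * ln x.
Proof.
rewrite le_eqVlt => /orP [/eqP <-|x0]; first by rewrite xlnx0 mul0r.
by rewrite /xlnx x0.
Qed.

Lemma Hk (x y : R) : 0 < x -> 0 < y -> x * (ln y - ln x) <= y - x.
Proof.
move=> x0 y0.
have h := @lnle (y / x)%R (divr_gt0 y0 x0).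
rewrite lnM ?invr_gt0 // lnV // in h.
have := ler_wpM2l (ltW x0) h.
have -> : x * (y / x - 1) = y - x by field; rewrite gt_eqF.
by [].
Qed.

Lemma tangent (x y : R) : 0 < y -> 0 <= x ->
  xlnx y + (ln y + 1) * (x - y) <= xlnx x.
Proof.
move=> y0 /ge0_cases [->|x0].
  rewrite xlnx0 (xlnxE (ltW y0)); lra.
rewrite (xlnxE (ltW x0)) (xlnxE (ltW y0)).
have := Hk x0 y0. nra.
Qed.

Lemma convex (m M l : R) : 0 <= m -> 0 <= M -> 0 <= l <= 1 ->
  xlnx (l * m + (1 - l) * M) <= l * xlnx m + (1 - l) * xlnx M.
Proof.
move=> m0 M0 /andP [l0 l1].
have p1 : 0 <= l * m by apply: mulr_ge0.
have p2 : 0 <= (1 - l) * M by apply: mulr_ge0; lra.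
have [y ey] : exists y, y = l * m + (1 - l) * M by eexists.
rewrite -ey.
have : 0 <= y by rewrite ey; lra.
move=> /ge0_cases [y0|y0].
  rewrite y0 xlnx0.
  have e1 : l * m = 0 by lra.
  have e2 : (1 - l) * M = 0 by lra.
  have q1 : l * xlnx m = 0.
    move/eqP: e1; rewrite mulf_eq0 => /orP [/eqP ->|/eqP ->]; first by rewrite mul0r.
    by rewrite xlnx0 mulr0.
  have q2 : (1 - l) * xlnx M = 0.
    move/eqP: e2; rewrite mulf_eq0 => /orP [/eqP ->|/eqP ->]; first by rewrite mul0r.
    by rewrite xlnx0 mulr0.
  rewrite q1 q2; lra.
have t1 := tangent y0 m0.
have t2 := tangent y0 M0.
have u1 := ler_wpM2l l0 t1.
have u2 : 0 <= 1 - l by lra.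
have u3 := ler_wpM2l u2 t2.
have : l * (xlnx y + (ln y + 1) * (m - y)) + (1 - l) * (xlnx y + (ln y + 1) * (M - y)) = xlnx y.
  rewrite ey; ring.
lra.
Qed.

Lemma I1 (a b g : R) : 0 <= a -> 0 <= b -> 0 <= g ->
  xlnx (a + b) + xlnx (a + g) <= xlnx (a + (b + g)) + xlnx a.
Proof.
move=> a0 b0 g0.
have [s0|sp] := ge0_cases (addr_ge0 b0 g0).
  have eb : b = 0 by lra.
  have eg : g = 0 by lra.
  rewrite eb eg !addr0; lra.
have [s es] : exists s, s = b + g by eexists.
rewrite -es in sp *.
have hl : 0 <= b / s <= 1.
  apply/andP; split; first by apply: divr_ge0 => //; lra.
  by rewrite ler_pdivrMr // mul1r es; lra.
have M0 : 0 <= a + s by lra.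
have c1 := convex a0 M0 hl.
have hl2 : 0 <= 1 - b / s <= 1 by move: hl => /andP [h1 h2]; apply/andP; split; lra.
have c2 := convex a0 M0 hl2.
have e1 : b / s * a + (1 - b / s) * (a + s) = a + g.
  rewrite es; field; rewrite -es; exact: lt0r_neq0.
have e2 : (1 - b / s) * a + (1 - (1 - b / s)) * (a + s) = a + b.
  rewrite es; field; rewrite -es; exact: lt0r_neq0.
rewrite e1 in c1; rewrite e2 in c2.
lra.
Qed.

Lemma logsum (V : finType) (a b : V -> R) :
  (forall v, 0 <= a v) -> (forall v, a v <= b v) ->
  xlnx (\sum_v a v) - (\sum_v a v) * ln (\sum_v b v)
  <= \sum_v (xlnx (a v) - a v * ln (b v)).
Proof.
move=> a0 ab.
have b0 : forall v, 0 <= b v by move=> v; exact: le_trans (a0 v) (ab v).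
have Ag : 0 <= \sum_v a v by apply: sumr_ge0 => v _; exact: a0.
have [A0|Ap] := ge0_cases Ag.
  have z := psumr_eq0P (fun v _ => a0 v) A0.
  rewrite A0 xlnx0 mul0r subr0.
  rewrite big1 // => v _; rewrite z // xlnx0 mul0r; lra.
have [A eA] : exists A, A = \sum_v a v by eexists.
have [B eB] : exists B, B = \sum_v b v by eexists.
rewrite -eA -eB in Ap *.
have AB : A <= B by rewrite eA eB; apply: ler_sum => v _.
have Bp : 0 < B by exact: (lt_le_trans Ap AB).
have key : forall v, a v * (ln A - ln B) + a v - b v * A / B <= xlnx (a v) - a v * ln (b v).
  move=> v; have [e|p] := ge0_cases (a0 v).
    rewrite e xlnx0 !mul0r.
    have : 0 <= b v * A / B by apply: divr_ge0; [apply: mulr_ge0; [exact: b0|exact: ltW]|exact: ltW].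
    lra.
  have bp : 0 < b v by exact: (lt_le_trans p (ab v)).
  have q : 0 < b v * A / B by apply: divr_gt0 => //; apply: mulr_gt0.
  have h := Hk p q.
  rewrite lnM ?mulr_gt0 ?invr_gt0 // lnM // lnV // in h.
  rewrite (xlnxE (ltW p)).
  nra.
have := @ler_sum _ V (index_enum V) xpredT _ _ (fun v _ => key v).
have eb : \sum_i b i * A / B = A.
  by rewrite -!mulr_suml -eB; field; exact: lt0r_neq0.
rewrite !big_split /= -!mulr_suml sumrN -eA eb.
rewrite (xlnxE (ltW Ap)).
lra.
Qed.

Lemma xlnxD (x y : R) : 0 <= x -> 0 <= y -> xlnx (x + y) = x * ln (x + y) + y * ln (x + y).
Proof. by move=> x0 y0; rewrite xlnxE ?addr_ge0 // mulrDl. Qed.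

Lemma superadd (V : finType) (a s : V -> R) :
  (forall v, 0 <= a v) -> (forall v, 0 <= s v) ->
  \sum_v (xlnx (a v + s v) - xlnx (a v) - xlnx (s v))
  <= xlnx (\sum_v a v + \sum_v s v) - xlnx (\sum_v a v) - xlnx (\sum_v s v).
Proof.
move=> a0 s0.
have A0 : 0 <= \sum_v a v by apply: sumr_ge0 => v _.
have S0 : 0 <= \sum_v s v by apply: sumr_ge0 => v _.
have h1 : forall v, a v <= a v + s v by move=> v; have := s0 v; lra.
have h2 : forall v, s v <= a v + s v by move=> v; have := a0 v; lra.
have l1 := @logsum V a (fun v => a v + s v) a0 h1.
have l2 := @logsum V s (fun v => a v + s v) s0 h2.
rewrite big_split /= in l1 l2.
rewrite (eq_bigr (fun v => - (xlnx (a v) - a v * ln (a v + s v)) - (xlnx (s v) - s v * ln (a v + s v)))); last first.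
  by move=> v _; rewrite xlnxD //; ring.
rewrite sumrB sumrN xlnxD //.
lra.
Qed.

Lemma xlnx_half (x : R) : 0 <= x -> xlnx x = x * ln 2%:R + 2%:R * xlnx (x / 2%:R).
Proof.
move=> /ge0_cases [->|xp]; first by rewrite !mul0r !xlnx0 mulr0 addr0.
have hp : 0 < x / 2%:R by apply: divr_gt0 => //; lra.
rewrite !xlnxE ?ltW // lnM ?invr_gt0 // lnV //; last lra.
Qed.

Lemma entropy_le (p q : R) : 0 <= p -> 0 <= q -> p + q = 1 ->
  - ln 2%:R <= xlnx p + xlnx q.
Proof.
move=> p0 q0 pq.
have hh : 0 < 1 / 2%:R :> R by lra.
have t1 := tangent hh p0.
have t2 := tangent hh q0.
rewrite (xlnxE (ltW hh)) mul1r lnV in t1 t2; last lra.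
have eq : q = 1 - p by lra.
rewrite eq in t2 *. lra.
Qed.

Lemma xlnx_le (t : R) : 0 <= t -> xlnx t <= t * (t - 1).
Proof.
move=> /ge0_cases [->|tp]; first by rewrite xlnx0 mul0r.
rewrite (xlnxE (ltW tp)); apply: ler_wpM2l; [exact: ltW|exact: lnle].
Qed.

Lemma le_sum1 (I : finType) (F : I -> R) j : (forall i, 0 <= F i) -> F j <= \sum_i F i.
Proof.
move=> F0; rewrite (bigD1 j) //= lerDl; apply: sumr_ge0 => i _; exact: F0.
Qed.

Lemma term3 (p x y : R) : 0 <= p -> p <= x -> p <= y ->
  (if 0 < p then p * log2 (p / (x * y)) else 0) * ln (IZR 2) = xlnx p - p * ln x - p * ln y.
Proof.
move=> /ge0_cases [->|pp] px py; first by rewrite ltxx xlnx0 !mul0r !subr0.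
have xp : 0 < x by exact: lt_le_trans pp px.
have yp : 0 < y by exact: lt_le_trans pp py.
have L := ln2pos.
rewrite pp /log2 (xlnxE (ltW pp)) lnM ?invr_gt0 ?mulr_gt0 // lnV ?mulr_gt0 // lnM //.
field; exact: lt0r_neq0.
Qed.

Lemma term4 (p w x y : R) : 0 <= p -> p <= w -> p <= x -> p <= y ->
  (if 0 < p then p * log2 (p * w / (x * y)) else 0) * ln (IZR 2)
  = xlnx p + p * ln w - p * ln x - p * ln y.
Proof.
move=> /ge0_cases [->|pp] pw px py; first by rewrite ltxx xlnx0 !mul0r !subr0 addr0.
have xp : 0 < x by exact: lt_le_trans pp px.
have yp : 0 < y by exact: lt_le_trans pp py.
have wp : 0 < w by exact: lt_le_trans pp pw.
have L := ln2pos.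
rewrite pp /log2 (xlnxE (ltW pp)) lnM ?invr_gt0 ?mulr_gt0 // lnV ?mulr_gt0 // !lnM //.
field; exact: lt0r_neq0.
Qed.

Lemma mi_eq (B C : finType) (p : B -> C -> R) : (forall b c, 0 <= p b c) ->
  mi p * ln (IZR 2) = \sum_b \sum_c xlnx (p b c) - \sum_b xlnx (\sum_c p b c)
                      - \sum_c xlnx (\sum_b p b c).
Proof.
move=> p0.
have e1 : \sum_b \sum_c p b c * ln (\sum_c p b c) = \sum_b xlnx (\sum_c p b c).
  apply: eq_bigr => b _; rewrite -mulr_suml xlnxE //; apply: sumr_ge0 => c _; exact: p0.
have e2 : \sum_b \sum_c p b c * ln (\sum_b p b c) = \sum_c xlnx (\sum_b p b c).
  rewrite exchange_big; apply: eq_bigr => c _; rewrite -mulr_suml xlnxE //.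
  apply: sumr_ge0 => b _; exact: p0.
rewrite -e1 -e2 -!sumrB /mi /= mulr_suml; apply: eq_bigr => b _.
rewrite -!sumrB mulr_suml; apply: eq_bigr => c _.
apply: term3 => //.
  exact: (@le_sum1 C (p b) c (p0 b)).
exact: (@le_sum1 B (fun b => p b c) b (fun b => p0 b c)).
Qed.

Lemma cmi_eq (A B C : finType) (p : A -> B -> C -> R) : (forall a b c, 0 <= p a b c) ->
  cmi p * ln (IZR 2) =
    \sum_a \sum_b \sum_c xlnx (p a b c) + \sum_a xlnx (\sum_b \sum_c p a b c)
    - \sum_a \sum_b xlnx (\sum_c p a b c) - \sum_a \sum_c xlnx (\sum_b p a b c).
Proof.
move=> p0.
have e1 : \sum_a \sum_b \sum_c p a b c * ln (\sum_b \sum_c p a b c)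
          = \sum_a xlnx (\sum_b \sum_c p a b c).
  apply: eq_bigr => a _.
  rewrite (eq_bigr (fun b => (\sum_c p a b c) * ln (\sum_b \sum_c p a b c))); last first.
    by move=> b _; rewrite -mulr_suml.
  rewrite -mulr_suml xlnxE //; apply: sumr_ge0 => b _; apply: sumr_ge0 => c _; exact: p0.
have e2 : \sum_a \sum_b \sum_c p a b c * ln (\sum_c p a b c)
          = \sum_a \sum_b xlnx (\sum_c p a b c).
  apply: eq_bigr => a _; apply: eq_bigr => b _.
  rewrite -mulr_suml xlnxE //; apply: sumr_ge0 => c _; exact: p0.
have e3 : \sum_a \sum_b \sum_c p a b c * ln (\sum_b p a b c)
          = \sum_a \sum_c xlnx (\sum_b p a b c).
  apply: eq_bigr => a _; rewrite exchange_big; apply: eq_bigr => c _.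
  rewrite -mulr_suml xlnxE //; apply: sumr_ge0 => b _; exact: p0.
rewrite -e1 -e2 -e3 -big_split -!sumrB /cmi /= mulr_suml; apply: eq_bigr => a _.
rewrite -big_split -!sumrB mulr_suml; apply: eq_bigr => b _.
rewrite -big_split -!sumrB mulr_suml; apply: eq_bigr => c _.
have nn : forall b, 0 <= \sum_c p a b c by move=> b'; apply: sumr_ge0 => c' _; exact: p0.
apply: term4 => //.
- apply: le_trans (@le_sum1 C (p a b) c (p0 a b)) _.
  exact: (@le_sum1 B (fun b => \sum_c p a b c) b nn).
- exact: (@le_sum1 C (p a b) c (p0 a b)).
- exact: (@le_sum1 B (fun b => p a b c) b (fun b => p0 a b c)).
Qed.


Lemma mi_bool (V : finType) (p : V -> bool -> R) : (forall v c, 0 <= p v c) ->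
  mi p * ln (IZR 2) = \sum_v (xlnx (p v true) + xlnx (p v false) - xlnx (p v true + p v false))
     - xlnx (\sum_v p v true) - xlnx (\sum_v p v false).
Proof.
move=> p0; rewrite mi_eq //.
have h1 : \sum_v \sum_c xlnx (p v c) = \sum_v (xlnx (p v true) + xlnx (p v false)).
  by apply: eq_bigr => v _; rewrite big_bool.
have h2 : \sum_v xlnx (\sum_c p v c) = \sum_v xlnx (p v true + p v false).
  by apply: eq_bigr => v _; rewrite big_bool.
rewrite h1 h2 big_bool /= sumrB; ring.
Qed.

Lemma core (V : finType) (al be ga : V -> R) :
  (forall v, 0 <= al v) -> (forall v, 0 <= be v) -> (forall v, 0 <= ga v) ->
  \sum_v al v + \sum_v (be v + ga v) = 1 -> \sum_v (be v + ga v) <= 1/2 ->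
  (mi (fun v (y : bool) => if y then al v / 2 + be v else al v / 2 + ga v)
   - mi (fun v (z : bool) => if z then be v + ga v else al v)) * ln (IZR 2)
  <= ln (IZR 2) - 3/8.
Proof.
move=> a0 b0 g0 tot cst.
rewrite mulrBl !mi_bool /=; first last.
- by move=> v [] /=; have := a0 v; have := b0 v; have := g0 v; lra.
- by move=> v [] /=; have := a0 v; have := b0 v; have := g0 v; lra.
rewrite IZR2.
set L := ln 2%:R.
have e : \sum_v (xlnx (al v / 2 + be v) + xlnx (al v / 2 + ga v) - xlnx (al v / 2 + be v + (al v / 2 + ga v)))
 = \sum_v (xlnx (al v / 2 + be v) + xlnx (al v / 2 + ga v) - xlnx (be v + ga v) - xlnx (al v))
 + \sum_v (xlnx (be v + ga v) + xlnx (al v) - xlnx (be v + ga v + al v)).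
  rewrite -big_split; apply: eq_bigr => v _ /=.
  have -> : al v / 2 + be v + (al v / 2 + ga v) = be v + ga v + al v by lra.
  ring.
rewrite e.
have pv : forall v, xlnx (al v / 2 + be v) + xlnx (al v / 2 + ga v) - xlnx (be v + ga v) - xlnx (al v)
   <= (xlnx (al v / 2 + (be v + ga v)) - xlnx (al v / 2) - xlnx (be v + ga v)) - al v * L.
  move=> v.
  have ha : 0 <= al v / 2 by have := a0 v; lra.
  have i1 := I1 ha (b0 v) (g0 v).
  have i2 := xlnx_half (a0 v).
  rewrite -/L in i2.
  lra.
have s1 := @ler_sum _ V (index_enum V) xpredT _ _ (fun v _ => pv v).
rewrite [X in _ <= X]sumrB -mulr_suml in s1.
have hh : forall v, 0 <= al v / 2 by move=> v; have := a0 v; lra.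
have hs : forall v, 0 <= be v + ga v by move=> v; have := b0 v; have := g0 v; lra.
have s2 := superadd hh hs.
have eA : \sum_v al v / 2 = (\sum_v al v) / 2 by rewrite mulr_suml.
rewrite eA in s2.
have eQ1 : \sum_v (al v / 2 + be v) = (\sum_v al v) / 2 + \sum_v be v by rewrite big_split /= -mulr_suml.
have eQ0 : \sum_v (al v / 2 + ga v) = (\sum_v al v) / 2 + \sum_v ga v by rewrite big_split /= -mulr_suml.
have eS : \sum_v (be v + ga v) = \sum_v be v + \sum_v ga v by rewrite big_split.
rewrite eQ1 eQ0.
rewrite eS in s2 tot cst *.
have A0 : 0 <= \sum_v al v by apply: sumr_ge0 => v _.
have B0 : 0 <= \sum_v be v by apply: sumr_ge0 => v _.
have G0 : 0 <= \sum_v ga v by apply: sumr_ge0 => v _.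
move: s1 s2 tot cst A0 B0 G0.
set A := \sum_v al v. set Bs := \sum_v be v. set Gs := \sum_v ga v.
move=> s1 s2 tot cst A0 B0 G0.
have hA := xlnx_half A0. rewrite -/L in hA.
have q1 : 0 <= A / 2 + Bs by lra.
have q0 : 0 <= A / 2 + Gs by lra.
have ent := entropy_le q1 q0 (ltac:(lra)).
rewrite -/L in ent.
have x1 := xlnx_le (ltac:(lra) : 0 <= A / 2 + (Bs + Gs)).
have x2 := xlnx_le (ltac:(lra) : 0 <= A / 2).
have key : (A / 2 + (Bs + Gs)) * (A / 2 + (Bs + Gs) - 1) + A / 2 * (A / 2 - 1) <= - (3 / 8).
  have -> : Bs + Gs = 1 - A by lra.
  nra.
lra.
Qed.


Lemma sumXin (F : Xin -> R) :
  \sum_x F x = F (true, true) + F (true, false) + F (false, true) + F (false, false).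
Proof.
have -> : \sum_x F x = \sum_(x : Xin | xpredT x.1 && xpredT x.2) F (x.1, x.2).
  by apply: eq_bigr => -[a b].
by rewrite -(pair_big xpredT xpredT (fun a b => F (a, b))) /= !big_bool /= addrA.
Qed.

Lemma sumVX (V : finType) (P : V * Xin -> R) :
  \sum_t P t = \sum_v \sum_x P (v, x).
Proof.
rewrite (pair_big xpredT xpredT (fun v x => P (v, x))) /=.
by apply: eq_bigr => -[v x].
Qed.

Lemma part2 (V : finType) (P : V * Xin -> R) :
  is_pmf P -> costV P <= 1 / 2 ->
  (mi (jointVY P) - mi (jointVZ P)) * ln (IZR 2) <= ln (IZR 2) - 3/8.
Proof.
move=> [P0 P1] cst.
pose al v := P (v, (true, false)) + P (v, (false, false)).
pose be v := P (v, (true, true)).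
pose ga v := P (v, (false, true)).
have eY : jointVY P = fun v (y : bool) => if y then al v / 2 + be v else al v / 2 + ga v.
  apply: functional_extensionality => v; apply: functional_extensionality => y.
  rewrite /jointVY sumXin !big_bool /W /PY /b2R /al /be /ga.
  case: y => /=; rewrite !RmultE !(mulr1, mulr0, mul0r, mul1r, addr0, add0r); lra.
 have eZ : jointVZ P = fun v (z : bool) => if z then be v + ga v else al v.
  apply: functional_extensionality => v; apply: functional_extensionality => z.
  rewrite /jointVZ sumXin !big_bool /W /PY /b2R /al /be /ga.
  case: z => /=; rewrite !RmultE !(mulr1, mulr0, mul0r, mul1r, addr0, add0r); lra.
rewrite eY eZ.
apply: core.
- by move=> v; rewrite /al; apply: addr_ge0.
- by move=> v; rewrite /be.
- by move=> v; rewrite /ga.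
- rewrite -big_split /= -P1 sumVX; apply: eq_bigr => v _.
  rewrite sumXin /al /be /ga; lra.
- move: cst; rewrite /costV.
  have -> : \sum_v \sum_x P (v, x) * cost x = \sum_v (be v + ga v).
    apply: eq_bigr => v _; rewrite sumXin /cost /b2R /be /ga /=; lra.
  by [].
Qed.


Definition PUV0 (t : bool * Xin) : R :=
  (if t.1 then (if t.2.2 then 1/4 else 0) else (if t.2 == (false, false) then 1/2 else 0))%R.
Definition K0 (v : Xin) (x : Xin) : R := b2R (x == v).

Definition jY0 (u : bool) (v : Xin) (y : bool) : R :=
  (if u then (if v.2 then (if y == v.1 then 1/4 else 0) else 0)
   else (if v == (false, false) then 1/4 else 0))%R.
Definition jZ0 (u : bool) (v : Xin) (z : bool) : R :=
  (if u then (if v.2 then (if z then 1/4 else 0) else 0)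
   else (if v == (false, false) then (if z then 0 else 1/2) else 0))%R.

Lemma sumbX (F : bool -> Xin -> R) :
  \sum_(t : bool * Xin) F t.1 t.2 = \sum_u \sum_v F u v.
Proof. by rewrite (pair_big xpredT xpredT F). Qed.

Lemma eY : jointUVY PUV0 K0 = jY0.
Proof.
apply: functional_extensionality => u; apply: functional_extensionality => v.
apply: functional_extensionality => y.
rewrite /jointUVY sumXin !big_bool /W /PY /b2R /PUV0 /K0 /jY0.
case: u; case: v => [[] []]; case: y => /=; rewrite !RmultE; lra.
Qed.

Lemma eZ : jointUVZ PUV0 K0 = jZ0.
Proof.
apply: functional_extensionality => u; apply: functional_extensionality => v.
apply: functional_extensionality => y.
rewrite /jointUVZ sumXin !big_bool /W /PY /b2R /PUV0 /K0 /jZ0.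
case: u; case: v => [[] []]; case: y => /=; rewrite !RmultE; lra.
Qed.

Lemma xq (x : R) : x = 1/4 -> xlnx x = - (ln 2%:R / 2).
Proof.
move=> ->; have h : 0 < 1/4 :> R by lra.
rewrite (xlnxE (ltW h)) mul1r lnV; last lra.
have -> : 4 = 2%:R ^+ 2 :> R by rewrite expr2; lra.
rewrite lnX; last lra. lra.
Qed.

Lemma xh (x : R) : x = 1/2 -> xlnx x = - (ln 2%:R / 2).
Proof.
move=> ->; have h : 0 < 1/2 :> R by lra.
rewrite (xlnxE (ltW h)) mul1r lnV; last lra. lra.
Qed.

Lemma xz (x : R) : x = 0 -> xlnx x = 0.
Proof. by move=> ->; rewrite xlnx0. Qed.

Lemma xo (x : R) : x = 1 -> xlnx x = 0.
Proof. by move=> ->; rewrite xlnxE ?ler01 // ln1 // mulr0. Qed.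

Ltac evx := repeat match goal with |- context [xlnx ?e] =>
   first [ rewrite (@xz e); last lra | rewrite (@xq e); last lra
         | rewrite (@xh e); last lra | rewrite (@xo e); last lra ] end.

Lemma cY : cmi jY0 * ln (IZR 2) = ln (IZR 2) / 2.
Proof.
rewrite cmi_eq; last first.
  by move=> [] [[] []] [] /=; lra.
rewrite IZR2 !(big_bool, sumXin) /jY0 /=.
evx.
lra.
Qed.

Lemma cZ : cmi jZ0 * ln (IZR 2) = 0.
Proof.
rewrite cmi_eq; last first.
  by move=> [] [[] []] [] /=; lra.
rewrite !(big_bool, sumXin) /jZ0 /=.
evx.
lra.
Qed.

Theorem proposition1 :
  (exists (U V : finType) (PUV : U * V -> R) (K : V -> Xin -> R),
      [/\ is_pmf PUV, (forall v, is_pmf (K v)),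
          costUV PUV K <= 1 / 2 &
          1 / 2 <= cmi (jointUVY PUV K) - cmi (jointUVZ PUV K)])
  /\
  (exists c : R, c < 1 / 2 /\
     forall (V : finType) (PVX : V * Xin -> R),
       is_pmf PVX -> costV PVX <= 1 / 2 ->
       mi (jointVY PVX) - mi (jointVZ PVX) <= c).
Proof.
have L := ln2pos.
split.
  exists bool, Xin, PUV0, K0; split.
  - split; first by move=> [[] [[] []]]; rewrite /PUV0 /=; lra.
    rewrite (eq_bigr (fun t => PUV0 (t.1, t.2))); last by move=> [].
    rewrite (sumbX (fun u v => PUV0 (u, v))) !(big_bool, sumXin) /PUV0 /=; lra.
  - move=> v; split; first by move=> x; rewrite /K0 /b2R; case: (x == v); lra.
    rewrite sumXin /K0 /b2R; case: v => [[] []] /=; lra.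
  - rewrite /costUV !(big_bool, sumXin) /PUV0 /K0 /cost /b2R /=; rewrite ?RmultE; lra.
  - rewrite eY eZ.
    have hY := cY. have hZ := cZ.
    have e1 : cmi jY0 = 1/2.
      apply: (mulIf (lt0r_neq0 L)); rewrite hY; lra.
    have e2 : cmi jZ0 = 0.
      apply: (mulIf (lt0r_neq0 L)); rewrite hZ; lra.
    rewrite e1 e2; lra.
exists ((ln (IZR 2) - 3/8) / ln (IZR 2))%R; split.
  rewrite ltr_pdivrMr //; have := ln2lt; lra.
move=> V PVX hp hc.
rewrite ler_pdivlMr //.
exact: part2.
Qed.
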